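(* Let $\mathbf{X}$, $\mathbf{A}$ be $\sigma$-structures, let $k\ge1$, and let $r$ be the maximum arity of a relation symbol in $\sigma$. Then: (1) if $\mathbb{P}^k\ne\emptyset$ and $r\le k$, then $\mathrm{SA}^k(\mathbf{X},\mathbf{A})$ is feasible; (2) if $\mathrm{SA}^{k+r-1}(\mathbf{X},\mathbf{A})$ is feasible, then $\mathbb{P}^k\ne\emptyset$.
   Context: A signature $\sigma$ is a finite set of relation symbols with arities $\operatorname{ar}(R)\ge1$; a $\sigma$-structure has finite universe and relations $R^\mathbf{A}\subseteq A^{\operatorname{ar}(R)}$. Constraints: $\mathcal{C}_\mathbf{X}=\{R(\mathbf{x}):R\in\sigma,\mathbf{x}\in R^\mathbf{X}\}$; $\{\mathbf{x}\}$ is the set of entries of a tuple $\mathbf{x}$. $\mathrm{SA}^k(\mathbf{X},\mathbf{A})$: variables $p_V(f)\in[0,1]$ ($V\subseteq X$, $1\le|V|\le k$, $f:V\to A$) and $p_{R(\mathbf{x})}(f)\in[0,1]$ ($R(\mathbf{x})\in\mathcal{C}_\mathbf{X}$, $f:\{\mathbf{x}\}\to A$); constraints $\sum_{f:V\to A}p_V(f)=1$; $p_U(f)=\sum_{g:V\to A,g|_U=f}p_V(g)$ for $\emptyset\ne U\subseteq V\subseteq X$, $|V|\le k$; $p_U(f)=\sum_{g:\{\mathbf{x}\}\to A,g|_U=f}p_{R(\mathbf{x})}(g)$ for $R(\mathbf{x})\in\mathcal{C}_\mathbf{X}$, $\emptyset\ne U\subseteq\{\mathbf{x}\}$, $|U|\le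 k$; $p_{R(\mathbf{x})}(f)=0$ if $f(\mathbf{x})\notin R^\mathbf{A}$. Feasible means a (rational) solution exists. The polytope $\mathbb{P}=\mathbb{P}(\mathbf{X},\mathbf{A})\subseteq[0,1]^{X\times A}$ has variables $y_{x,a}\in[0,1]$ subject to $\sum_{a\in A}y_{x,a}=1$ for each $x\in X$, and $\sum_{x\in\{\mathbf{x}\}}y_{x,f(x)}\le|\{\mathbf{x}\}|-1$ for each $R\in\sigma$, $\mathbf{x}\in R^\mathbf{X}$ and $f:\{\mathbf{x}\}\to A$ with $f(\mathbf{x})\notin R^\mathbf{A}$. Sherali–Adams: writing $\mathbb{P}=\{\mathbf{y}\in\mathbb{R}^n: M\mathbf{y}\ge\mathbf{b},\ 0\le\mathbf{y}\le1\}$ (equalities as pairs of inequalities), multiply each inequality of $M\mathbf{y}\ge\mathbf{b}$ by every term $\prod_{i\in I}y_i\prod_{j\in J}(1-y_j)$ with $I\cap J=\emptyset$, $|I\cup J|\le k-1$; linearize by replacing each $y_i^2$ by $y_i$ and each monomial $\prod_{i\in K}y_i$ by a new variable $z_K$, obtaining a polytope $\mathbb{P}^k_L$; then $\mathbb{P}^k=\{\mathbf{y}\in\mathbb{R}^n:\exists\mathbf{z}\in\mathbb{P}^k_L\text{ with }z_{\{i\}}=y_i\ \forall i\}$. *)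

(* Defs.v *)
From HB Require Import structures.
From mathcomp Require Import all_boot all_order all_algebra.

Set Implicit Arguments.
Unset Strict Implicit.
Unset Printing Implicit Defensive.

Import Order.TTheory GRing.Theory Num.Theory.
Local Open Scope ring_scope.

Section SheraliAdams.

Variable F : realFieldType.
Variables (sig : finType) (ar : sig -> nat) (X A : finType).
Variable relX : forall R : sig, {set (ar R).-tuple X}.
Variable relA : forall R : sig, {set (ar R).-tuple A}.

Definition entries n (t : n.-tuple X) : {set X} := [set x in t].

(* partial maps X -> A; a map f : V -> A is a partial map with domain V *)
Definition pfun := {ffun X -> option A}.
Definition pdom (f : pfun) : {set X} := [set x | f x != None].
Definition prestr (f : pfun) (U : {set X}) : pfun :=
  [ffun x => if x \in U then f x else None].

Definition SA_feasible (k : nat) : Prop :=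
  exists (pV : {set X} -> pfun -> F)
         (pC : forall R : sig, (ar R).-tuple X -> pfun -> F),
  [/\ (forall (V : {set X}) f, (0 < #|V| <= k)%N -> pdom f = V -> 0 <= pV V f <= 1)
       /\ (forall R t f, t \in relX R -> pdom f = entries t -> 0 <= pC R t f <= 1),
      (forall V : {set X}, (0 < #|V| <= k)%N -> \sum_(f | pdom f == V) pV V f = 1),
      (forall (U V : {set X}) f, U != set0 -> U \subset V -> (#|V| <= k)%N -> pdom f = U ->
          pV U f = \sum_(g | (pdom g == V) && (prestr g U == f)) pV V g),
      (forall R t (U : {set X}) f, t \in relX R -> U != set0 -> U \subset entries t ->
          (#|U| <= k)%N -> pdom f = U ->
          pV U f = \sum_(g | (pdom g == entries t) && (prestr g U == f)) pC R t g)
    & (forall R t f, t \in relX R -> pdom f = entries t ->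
          (forall u : (ar R).-tuple A, map f t = map Some u -> u \notin relA R) ->
          pC R t f = 0)].

(* variables y_{x,a} are indexed by T = X * A *)
Definition T := (X * A)%type.

(* multilinear polynomials in the y_i : coefficient of the monomial
   prod_{i in K} y_i, for K : {set T} (set0 = constant monomial) *)
Definition mlpoly := {set T} -> F.

Definition ml_aff (c0 : F) (c : T -> F) : mlpoly :=
  fun K => if K == set0 then c0
           else \sum_(i : T) (if K == [set i] then c i else 0).

(* product of polynomials followed by y_i^2 -> y_i *)
Definition ml_mul (p q : mlpoly) : mlpoly :=
  fun K => \sum_(K1 : {set T}) \sum_(K2 : {set T} | K1 :|: K2 == K) p K1 * q K2.

Definition ml_y (i : T) : mlpoly := ml_aff 0 (fun j => (j == i)%:R).
Definition ml_1my (j : T) : mlpoly := ml_aff 1 (fun i => - (i == j)%:R).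

Definition ml_term (I J : {set T}) : mlpoly :=
  foldr ml_mul (ml_aff 1 (fun _ => 0))
    ([seq ml_y i | i <- enum I] ++ [seq ml_1my j | j <- enum J]).

Definition linearize (z : {set T} -> F) (p : mlpoly) : F :=
  p set0 + \sum_(K : {set T} | K != set0) p K * z K.

(* The inequalities  M y >= b  of P, each written as  q(y) >= 0  with q
   affine; this includes the box constraints 0 <= y <= 1. *)
Definition Pineq (q : mlpoly) : Prop :=
  (exists x : X, q = ml_aff (-1) (fun i => if i.1 == x then 1 else 0))
  \/ (exists x : X, q = ml_aff 1 (fun i => if i.1 == x then -1 else 0))
  \/ (exists (R : sig) (t : (ar R).-tuple X) (g : {ffun X -> A}),
        [/\ t \in relX R, [tuple of map g t] \notin relA R &
            q = ml_aff (#|entries t|%:R - 1)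
                  (fun i => if (i.1 \in entries t) && (i.2 == g i.1) then -1 else 0)])
  \/ (exists i : T, q = ml_y i)
  \/ (exists i : T, q = ml_1my i).

Definition PkL (k : nat) (z : {set T} -> F) : Prop :=
  forall (q : mlpoly) (I J : {set T}),
    Pineq q -> [disjoint I & J] -> (#|I :|: J| <= k - 1)%N ->
    0 <= linearize z (ml_mul (ml_term I J) q).

Definition in_Pk (k : nat) (y : T -> F) : Prop :=
  exists z : {set T} -> F, PkL k z /\ forall i : T, z [set i] = y i.

Definition Pk_nonempty (k : nat) : Prop := exists y : T -> F, in_Pk k y.

End SheraliAdams.

(* Main.v *)
Require Import Defs.
From HB Require Import structures.
From mathcomp Require Import all_boot all_order all_algebra.
From mathcomp Require Import ring lra zify.
Set Implicit Arguments. Unset Strict Implicit. Unset Printing Implicit Defensive.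
Import Order.TTheory GRing.Theory Num.Theory.
Local Open Scope ring_scope.



Section Poly.
Variables (F : realFieldType) (X A : finType).
Local Notation TT := (T X A).
Local Notation P := (mlpoly F X A).

Lemma set1_n0 (i : TT) : ([set i] == set0) = false.
Proof. by apply/negbTE/set0Pn; exists i; rewrite set11. Qed.
Lemma set1_n0' (i : TT) : (set0 == [set i]) = false.
Proof. by rewrite eq_sym set1_n0. Qed.

Definition zz (z : {set TT} -> F) (K : {set TT}) : F := if K == set0 then 1 else z K.

Lemma lin_sum z (p : P) : linearize z p = \sum_K p K * zz z K.
Proof.
rewrite /linearize [RHS](bigD1 set0) //= /zz eqxx mulr1; congr (_ + _).
by apply: eq_bigr => K /negbTE ->.
Qed.

Lemma sum_aff (c0 : F) (c : TT -> F) (G : {set TT} -> F) :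
  \sum_K ml_aff c0 c K * G K = c0 * G set0 + \sum_i c i * G [set i].
Proof.
rewrite (bigD1 set0) //= /ml_aff eqxx; congr (_ + _).
rewrite (eq_bigr (fun K => \sum_i (if K == [set i] then c i else 0) * G K)); last first.
  by move=> K /negbTE ->; rewrite mulr_suml.
rewrite exchange_big /=; apply: eq_bigr => i _.
rewrite (bigD1 [set i]) /=; last by rewrite set1_n0.
rewrite eqxx big1 ?addr0 // => K /andP [_ /negbTE ->]; by rewrite mul0r.
Qed.

Lemma mul_sum (p q : P) (G : {set TT} -> F) :
  \sum_K ml_mul p q K * G K = \sum_K1 \sum_K2 p K1 * q K2 * G (K1 :|: K2).
Proof.
rewrite /ml_mul.
under eq_bigr do rewrite big_distrl /=.
rewrite exchange_big /=; apply: eq_bigr => K1 _.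
under eq_bigr do rewrite big_distrl /= big_mkcond /=.
rewrite exchange_big /=; apply: eq_bigr => K2 _.
rewrite (bigD1 (K1 :|: K2)) //= eqxx big1 ?addr0 // => K /negbTE.
by rewrite eq_sym => ->.
Qed.

Definition ev (p : P) (S : {set TT}) : F := \sum_K p K * (K \subset S)%:R.

Lemma ev_mul p q S : ev (ml_mul p q) S = ev p S * ev q S.
Proof.
rewrite /ev mul_sum big_distrl /=; apply: eq_bigr => K1 _.
rewrite big_distrr /=; apply: eq_bigr => K2 _.
by rewrite subUset; case: (K1 \subset S); case: (K2 \subset S); rewrite /= ?mulr1 ?mulr0 ?mul0r ?mulr1.
Qed.

Lemma ev_aff c0 c S : ev (ml_aff c0 c) S = c0 + \sum_i c i * (i \in S)%:R.
Proof.
rewrite /ev sum_aff sub0set mulr1; congr (_ + _).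
by apply: eq_bigr => i _; rewrite sub1set.
Qed.

Lemma ml_y_eq (i : TT) (K : {set TT}) : ml_y F i K = (K == [set i])%:R.
Proof.
rewrite /ml_y /ml_aff; case: eqP => [->|_].
  by rewrite set1_n0'.
rewrite (bigD1 i) //= eqxx big1 ?addr0; first by case: (K == [set i]).
by move=> j /negbTE ji; case: (K == [set j]); rewrite ?ji.
Qed.

Lemma fold_y_sum (s : seq TT) (G : {set TT} -> F) :
  \sum_K foldr (@ml_mul F X A) (ml_aff 1 (fun _ => 0)) [seq ml_y F i | i <- s] K * G K
  = G [set x in s].
Proof.
elim: s G => [|a s IH] G /=.
  rewrite sum_aff big1 ?addr0 ?mul1r //; last by move=> i _; rewrite mul0r.
rewrite mul_sum.
rewrite (bigD1 [set a]) //= [X in _ + X]big1 ?addr0; last first.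
  by move=> K1 Hk; apply: big1 => K2 _; rewrite ml_y_eq (negbTE Hk) !mul0r.
under eq_bigr do rewrite ml_y_eq eqxx mul1r.
rewrite (IH (fun K => G ([set a] :|: K))); congr G.
by apply/setP => x; rewrite !inE.
Qed.

Lemma term0_sum (I : {set TT}) (G : {set TT} -> F) :
  \sum_K ml_term F I set0 K * G K = G I.
Proof.
rewrite /ml_term enum_set0 cats0 fold_y_sum; congr G.
by apply/setP => x; rewrite inE mem_enum.
Qed.

Lemma lin_term0_aff z I c0 c :
  linearize z (ml_mul (ml_term F I set0) (ml_aff c0 c)) =
  c0 * zz z I + \sum_i c i * zz z (I :|: [set i]).
Proof.
rewrite lin_sum mul_sum.
rewrite (eq_bigr (fun K1 => ml_term F I set0 K1 *
    \sum_K2 ml_aff c0 c K2 * zz z (K1 :|: K2))); last first.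
  by move=> K1 _; rewrite big_distrr; apply: eq_bigr => K2 _ /=; rewrite !mulrA.
by rewrite (term0_sum I (fun K1 => \sum_K2 ml_aff c0 c K2 * zz z (K1 :|: K2))) sum_aff setU0.
Qed.

Definition supp (p : P) (W : {set X}) :=
  forall K, p K != 0 -> K \subset [set i : TT | i.1 \in W].

Lemma supp_mul (p q : P) (W : {set X}) : supp p W -> supp q W -> supp (ml_mul p q) W.
Proof.
move=> hp hq K; apply: contraR => hK; apply/eqP.
rewrite /ml_mul big1 // => K1 _; apply: big1 => K2 /eqP hU.
case: (eqVneq (p K1) 0) => [->|/hp h1]; first by rewrite mul0r.
case: (eqVneq (q K2) 0) => [->|/hq h2]; first by rewrite mulr0.
by move: hK; rewrite -hU subUset h1 h2.
Qed.

Lemma supp_aff (c0 : F) (c : TT -> F) (W : {set X}) : (forall i, c i != 0 -> i.1 \in W) -> supp (ml_aff c0 c) W.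
Proof.
move=> hc K; apply: contraR => hK; apply/eqP; rewrite /ml_aff.
case: eqP => [E|_]; first by move: hK; rewrite E sub0set.
apply: big1 => i _; case: eqP => // E.
case: (eqVneq (c i) 0) => // /hc hi.
by move: hK; rewrite E sub1set inE hi.
Qed.

Lemma fold_prop (Q : P -> Prop) (s t : seq TT) (f g : TT -> P) :
  Q (ml_aff 1 (fun _ => 0)) -> (forall p q, Q p -> Q q -> Q (ml_mul p q)) ->
  (forall i, i \in s -> Q (f i)) -> (forall j, j \in t -> Q (g j)) ->
  Q (foldr (@ml_mul F X A) (ml_aff 1 (fun _ => 0)) ([seq f i | i <- s] ++ [seq g j | j <- t])).
Proof.
move=> h1 hM hs ht; elim: s hs => [|a s IH] hs /=.
  elim: t ht => [|b t IHt] ht //=.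
  apply: hM; first by apply: ht; rewrite inE eqxx.
  by apply: IHt => j hj; apply: ht; rewrite inE hj orbT.
apply: hM; first by apply: hs; rewrite inE eqxx.
by apply: IH => j hj; apply: hs; rewrite inE hj orbT.
Qed.

Lemma supp_term (I J : {set TT}) (W : {set X}) :
  (forall i, i \in I :|: J -> i.1 \in W) -> supp (ml_term F I J) W.
Proof.
move=> h; rewrite /ml_term; apply: (fold_prop (Q := fun p => supp p W)).
- by apply: supp_aff => i; rewrite eqxx.
- by move=> p q; apply: supp_mul.
- move=> i; rewrite mem_enum => hi; apply: supp_aff => j.
  case: (eqVneq j i) => [->|] hji; first by apply: h; rewrite inE hi.
  by move: hji; rewrite eqxx.
- move=> i; rewrite mem_enum => hi; apply: supp_aff => j.
  case: (eqVneq j i) => [->|] hji; first by apply: h; rewrite inE hi orbT.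
  by move: hji; rewrite oppr0 eqxx.
Qed.

Lemma ev_term_ge0 (I J S : {set TT}) : 0 <= ev (ml_term F I J) S.
Proof.
rewrite /ml_term; apply: (fold_prop (Q := fun p => 0 <= ev p S)).
- by rewrite ev_aff big1 ?addr0 // => i _; rewrite mul0r.
- by move=> p q hp hq; rewrite ev_mul mulr_ge0.
- move=> i _; rewrite ev_aff add0r sumr_ge0 // => j _.
  by case: (j == i); rewrite ?mul0r // mul1r ler0n.
- move=> i _; rewrite ev_aff (bigD1 i) //= big1 ?addr0; last first.
    by move=> j /negbTE ->; rewrite oppr0 mul0r.
  by rewrite eqxx mulN1r subr_ge0; case: (i \in S).
Qed.

Lemma lin_ev z (p : P) W (H : finType) (w : H -> F) (S : H -> {set TT}) :
  supp p W ->
  (forall K : {set TT}, K \subset [set i : TT | i.1 \in W] -> zz z K = \sum_h w h * (K \subset S h)%:R) ->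
  linearize z p = \sum_h w h * ev p (S h).
Proof.
move=> hp hz; rewrite lin_sum.
rewrite (eq_bigr (fun K => \sum_h p K * (w h * (K \subset S h)%:R))); last first.
  move=> K _; case: (eqVneq (p K) 0) => [->|/hp hK].
    by rewrite mul0r big1 // => h _; rewrite mul0r.
  by rewrite hz // big_distrr.
rewrite exchange_big /=; apply: eq_bigr => h _.
rewrite /ev big_distrr /=; apply: eq_bigr => K _; ring.
Qed.

End Poly.



Section Pfun.
Variables (F : realFieldType) (X A : finType).
Local Notation TT := (T X A).
Local Notation P := (mlpoly F X A).
Local Notation pf := (pfun X A).

Definition gr (h : pf) : {set TT} := [set i : TT | h i.1 == Some i.2].

Lemma in_gr (h : pf) (i : TT) : (i \in gr h) = (h i.1 == Some i.2).
Proof. by rewrite inE. Qed.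

Lemma in_pdom (h : pf) x : (x \in pdom h) = (h x != None).
Proof. by rewrite inE. Qed.

Lemma prestr_pdom (g : pf) (U : {set X}) : pdom g = U -> prestr g U = g.
Proof.
move=> hU; apply/ffunP => x; rewrite ffunE; case: ifP => // hx.
by apply/eqP; move: hx; rewrite -hU in_pdom; case: (g x).
Qed.

Lemma prestrE (g : pf) (U : {set X}) x : prestr g U x = if x \in U then g x else None.
Proof. by rewrite ffunE. Qed.

Lemma pdom_prestr (g : pf) (U : {set X}) : pdom (prestr g U) = pdom g :&: U.
Proof.
by apply/setP => x; rewrite in_setI !in_pdom prestrE; case: (x \in U); rewrite ?andbT ?andbF.
Qed.

Lemma prestr2 (g : pf) (U V : {set X}) : U \subset V -> prestr (prestr g V) U = prestr g U.
Proof.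
move=> sUV; apply/ffunP => x; rewrite !prestrE; case: ifP => // hx.
by rewrite (subsetP sUV x hx).
Qed.

Definition cons (K : {set TT}) :=
  [forall i, forall j, [&& i \in K, j \in K & i.1 == j.1] ==> (i == j)].
Definition dK (K : {set TT}) : {set X} := [set i.1 | i in K].
Definition fK (K : {set TT}) : pf := [ffun x => [pick a | (x, a) \in K]].

Lemma consP (K : {set TT}) : reflect (forall i j, i \in K -> j \in K -> i.1 = j.1 -> i = j) (cons K).
Proof.
apply: (iffP forallP) => [h i j hi hj e|h i].
  by move: (forallP (h i) j); rewrite hi hj e eqxx /= => /eqP.
apply/forallP => j; apply/implyP => /and3P [hi hj /eqP e]; apply/eqP; exact: h.
Qed.

Lemma in_dK (K : {set TT}) x : reflect (exists a, (x, a) \in K) (x \in dK K).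
Proof.
apply: (iffP imsetP) => [[[y a] hi /= ->]|[a ha]]; first by exists a.
by exists (x, a).
Qed.

Lemma pdom_fK (K : {set TT}) : pdom (fK K) = dK K.
Proof.
apply/setP => x; rewrite in_pdom ffunE.
case: pickP => [a ha|h0] /=; first by apply/esym/in_dK; exists a.
by apply/esym/in_dK => [[a ha]]; move: (h0 a); rewrite ha.
Qed.

Lemma sub_gr_cons (K : {set TT}) (h : pf) : K \subset gr h -> cons K.
Proof.
move=> sK; apply/consP => [[x a] [y b] /(subsetP sK) hi /(subsetP sK) hj /= e].
move: hi hj; rewrite !in_gr /= e => /eqP -> /eqP [->] //.
Qed.

Lemma restr_fK (K : {set TT}) (h : pf) (W : {set X}) : cons K -> pdom h = W -> dK K \subset W ->
  (prestr h (dK K) == fK K) = (K \subset gr h).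
Proof.
move/consP=> cK hW sK; apply/eqP/subsetP => [E [x a] hxa|sub].
  have hx : x \in dK K by apply/in_dK; exists a.
  move: (congr1 (fun g : pf => g x) E); rewrite prestrE hx ffunE in_gr /=.
  case: pickP => [b hb ->|h0]; last by move: (h0 a); rewrite hxa.
  by move: (cK _ _ hxa hb erefl) => [->].
apply/ffunP => x; rewrite prestrE ffunE.
case: ifPn => [/in_dK [a ha]|hx].
  case: pickP => [b hb|h0]; last by move: (h0 a); rewrite ha.
  move: (cK _ _ hb ha erefl) => [->].
  by move: (sub _ ha); rewrite in_gr => /eqP.
case: pickP => [b hb|//]; case/negP: hx; apply/in_dK; by exists b.
Qed.

Definition zof (pV : {set X} -> pf -> F) (K : {set TT}) : F :=
  if cons K then pV (dK K) (fK K) else 0.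

Lemma dK_sub (K : {set TT}) (W : {set X}) : K \subset [set i : TT | i.1 \in W] -> dK K \subset W.
Proof.
move=> sK; apply/subsetP => x /in_dK [a ha].
by move: (subsetP sK _ ha); rewrite inE.
Qed.

Lemma dK0 (K : {set TT}) : (dK K == set0) = (K == set0).
Proof.
apply/idP/idP => /eqP E; apply/eqP; last by rewrite E /dK imset0.
apply/setP => [[x a]]; rewrite inE; apply/negP => h.
have : x \in dK K by apply/in_dK; exists a.
by rewrite E inE.
Qed.

Lemma key_zof (pV : {set X} -> pf -> F) (k' : nat) (W : {set X}) :
  (0 < #|W| <= k')%N ->
  \sum_(f | pdom f == W) pV W f = 1 ->
  (forall (U V : {set X}) f, U != set0 -> U \subset V -> (#|V| <= k')%N -> pdom f = U ->
          pV U f = \sum_(g | (pdom g == V) && (prestr g U == f)) pV V g) ->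
  forall K : {set TT}, K \subset [set i : TT | i.1 \in W] ->
  zz (zof pV) K = \sum_h (if pdom h == W then pV W h else 0) * (K \subset gr h)%:R.
Proof.
move=> /andP [W0 Wk] hs hm K sK.
rewrite /zz; case: eqP => [->|/eqP K0].
  rewrite -{1}hs big_mkcond /=; apply: eq_bigr => h _; by rewrite sub0set /= mulr1.
rewrite /zof; case: ifP => cK; last first.
  apply/esym/big1 => h _; case: (boolP (K \subset gr h)) => [/sub_gr_cons|]; first by rewrite cK.
  by move=> _; rewrite mulr0.
rewrite (hm (dK K) W) //; first last.
- exact: pdom_fK.
- exact: dK_sub.
- by rewrite dK0.
rewrite big_mkcond /=; apply: eq_bigr => h _.
case: (eqVneq (pdom h) W) => [hW|]; last by rewrite mul0r.
by rewrite /= (restr_fK cK hW (dK_sub sK)); case: (K \subset gr h); rewrite ?mulr1 ?mulr0.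
Qed.

End Pfun.



Section Ev.
Variables (F : realFieldType) (X A : finType).
Local Notation TT := (T X A).
Local Notation P := (mlpoly F X A).
Local Notation pf := (pfun X A).

Lemma sum_pair (G : TT -> F) : \sum_(i : TT) G i = \sum_x \sum_a G (x, a).
Proof. by rewrite pair_bigA; apply: eq_bigr => [[x a]]. Qed.

Lemma sum_x (h : pf) x a0 (c : F) : h x = Some a0 ->
  \sum_(i : TT) (if i.1 == x then c else 0) * (i \in gr h)%:R = c.
Proof.
move=> hx; rewrite (bigD1 (x, a0)) //= eqxx in_gr /= hx eqxx mulr1 big1 ?addr0 //.
move=> [y b] /= hne; case: eqP => [e|]; last by rewrite mul0r.
rewrite in_gr /= e hx; case: eqP => [[eb]|]; last by rewrite mulr0.
by move: hne; rewrite e eb eqxx.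
Qed.

Lemma ev_y (i : TT) S : ev (ml_y F i) S = (i \in S)%:R.
Proof.
rewrite ev_aff add0r (bigD1 i) //= eqxx mul1r big1 ?addr0 //.
by move=> j /negbTE ->; rewrite mul0r.
Qed.

Lemma ev_1my (i : TT) S : ev (ml_1my F i) S = 1 - (i \in S)%:R.
Proof.
rewrite ev_aff (bigD1 i) //= eqxx big1 ?addr0; first by rewrite mulN1r.
by move=> j /negbTE ->; rewrite oppr0 mul0r.
Qed.

Lemma ev_rel (E : {set X}) (g : {ffun X -> A}) (h : pf) :
  ev (ml_aff (#|E|%:R - 1) (fun i : TT => if (i.1 \in E) && (i.2 == g i.1) then (-1 : F) else 0)) (gr h)
  = \sum_(x in E) (1 - (h x == Some (g x))%:R) - 1.
Proof.
rewrite ev_aff sum_pair sumrB sumr_const.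
rewrite [\sum_(x in E) _]big_mkcond /=.
rewrite (_ : \sum_x \sum_a _ = - \sum_x (if x \in E then (h x == Some (g x))%:R else 0)); last first.
  rewrite -sumrN; apply: eq_bigr => x _.
  rewrite (bigD1 (g x)) //= eqxx big1 ?addr0; last first.
    by move=> a /negbTE ->; rewrite andbF mul0r.
  by case: (x \in E); rewrite /= ?oppr0 ?mul0r // in_gr /= mulN1r.
rewrite -mulr_natl mulr1; ring.
Qed.

End Ev.



Section Part2.
Variables (F : realFieldType) (sig : finType) (ar : sig -> nat) (X A : finType).
Variable relX : forall R : sig, {set (ar R).-tuple X}.
Variable relA : forall R : sig, {set (ar R).-tuple A}.
Local Notation TT := (T X A).
Local Notation P := (mlpoly F X A).
Local Notation pf := (pfun X A).

Lemma entries_card R (t : (ar R).-tuple X) : (#|entries t| <= ar R)%N.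
Proof. by rewrite /entries cardsE (leq_trans (card_size t)) // size_tuple. Qed.

Lemma entries_n0 R (t : (ar R).-tuple X) : (0 < ar R)%N -> entries t != set0.
Proof.
move=> h; apply/set0Pn; exists (tnth t (Ordinal h)); by rewrite inE mem_tnth.
Qed.

Lemma supp_sub (p : P) (D W : {set X}) : supp p D -> D \subset W -> supp p W.
Proof.
move=> hp sDW K /hp sK; apply/subsetP => i /(subsetP sK); rewrite !inE => hi.
exact: (subsetP sDW).
Qed.

Lemma part2 (k r : nat) :
  (forall R, 0 < ar R)%N -> (forall R, ar R <= r)%N -> (0 < r)%N -> (0 < k)%N ->
  SA_feasible F relX relA (k + r - 1) -> Pk_nonempty F relX relA k.
Proof.
move=> ar0 arr r0 k0 [pV [pC [[bV bC] hsum hmarg hrel hzero]]].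
set k' := (k + r - 1)%N.
pose z := zof pV.
exists (fun i => z [set i]), z; split => // q I J hq hdis hIJ.
have main : forall D : {set X}, D != set0 -> (#|D| <= r)%N -> supp q D ->
   (forall (W : {set X}) (h : pf), D \subset W -> (0 < #|W| <= k')%N -> pdom h = W -> 0 <= pV W h * ev q (gr h)) ->
   0 <= linearize z (ml_mul (ml_term F I J) q).
  move=> D D0 Dr sD hD.
  pose W := [set i.1 | i in I :|: J] :|: D.
  have sDW : D \subset W by apply: subsetUr.
  have hW : (0 < #|W| <= k')%N.
    apply/andP; split.
      by rewrite card_gt0; apply: contraNneq D0 => W0; apply/eqP/setP => x;
        rewrite inE; apply/negP => hx; move: (subsetP sDW x hx); rewrite W0 inE.
    rewrite /k' (leq_trans (leq_card_setU _ _)) //.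
    have := leq_imset_card (fun i : TT => i.1) (I :|: J); move=> hh; apply: leq_trans (leq_add (leq_trans hh hIJ) Dr) _; lia.
  rewrite (@lin_ev F X A z _ W pf (fun h => if pdom h == W then pV W h else 0) (@gr X A)).
  - apply: sumr_ge0 => h _; rewrite ev_mul.
    case: eqP => [hW'|]; last by rewrite mul0r.
    by rewrite mulrCA mulr_ge0 ?ev_term_ge0 ?hD.
  - apply: supp_mul; last exact: supp_sub sD sDW.
    apply: supp_term => i hi; rewrite inE; apply/orP; left; exact: imset_f.
  - exact: key_zof hW (hsum W hW) hmarg.
have pV0 : forall (W : {set X}) (h : pf), (0 < #|W| <= k')%N -> pdom h = W -> 0 <= pV W h.
  by move=> W h hW hh; case/andP: (bV W h hW hh).
have s1 : forall x : X, [set x] != set0 by move=> x; apply/set0Pn; exists x; rewrite set11.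
have c1 : forall x : X, (#|[set x]| <= r)%N by move=> x; rewrite cards1.
have dom1 : forall (W : {set X}) (h : pf) x, x \in W -> pdom h = W -> exists a, h x = Some a.
  move=> W h x hx hh; move: hx; rewrite -hh in_pdom; case: (h x) => // a _; by exists a.
case: hq => [[x ?]|[[x ?]|[[R [t [g [ht hg ?]]]]|[[i ?]|[i ?]]]]]; subst q.
- apply: (main [set x]) => //.
    by apply: supp_aff => i; case: (eqVneq i.1 x) => [-> _|_]; rewrite ?set11 ?eqxx.
  move=> W h sW hW hh; have [a0 ha0] := dom1 W h x (subsetP sW x (set11 x)) hh.
  by rewrite ev_aff (sum_x 1 ha0) addNr mulr0.
- apply: (main [set x]) => //.
    by apply: supp_aff => i; case: (eqVneq i.1 x) => [-> _|_]; rewrite ?set11 ?eqxx.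
  move=> W h sW hW hh; have [a0 ha0] := dom1 W h x (subsetP sW x (set11 x)) hh.
  by rewrite ev_aff (sum_x (-1) ha0) addrN mulr0.
- have E0 := entries_n0 t (ar0 R).
  have Ek : (#|entries t| <= k')%N.
    by have := entries_card t; have := arr R; rewrite /k'; lia.
  apply: (main (entries t)) => //.
  + exact: leq_trans (entries_card t) (arr R).
  + apply: supp_aff => i; case: ifP => [/andP [hi _] _|_]; first exact: hi.
    by rewrite eqxx.
  move=> W h sW hW hh; rewrite ev_rel.
  case: (boolP [forall x in entries t, h x == Some (g x)]) => [/forallP hall|/forallPn [x0]].
    set E := entries t in E0 Ek sW hall *.
    set f := prestr h E.
    have hfE : pdom f = E by rewrite pdom_prestr hh; apply/setIidPr.
    have h1 : pV E f = pC R t f.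
      rewrite (hrel R t E f ht E0 (subxx E) Ek hfE) (big_pred1 f) // => g'.
      apply/andP/eqP => [[/eqP hg' /eqP <-]|->]; first by rewrite prestr_pdom.
      by rewrite hfE prestr_pdom // eqxx.
    have h2 : pC R t f = 0.
      apply: hzero => // u hu.
      have : val u = val [tuple of map g t].
        apply: (inj_map (@Some_inj _)); rewrite -hu /=.
        rewrite -map_comp; apply/eq_in_map => x hx; have hxE : x \in E by rewrite inE.
        by rewrite prestrE hxE; apply/eqP; exact: (implyP (hall x) hxE).
      by move/val_inj => ->.
    have h3 : pV W h <= pV E f.
      rewrite (hmarg E W f E0 sW (proj2 (andP hW)) hfE) (bigD1 h) /=; last by rewrite hh !eqxx.
      rewrite lerDl sumr_ge0 // => g' /andP [/andP [/eqP hg' _] _]; exact: pV0.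
    have -> : pV W h = 0.
      by apply/eqP; rewrite eq_le pV0 // andbT -h2 -h1.
    by rewrite mul0r.
  rewrite negb_imply => /andP [hx0 hn].
  apply: mulr_ge0; first exact: pV0.
  rewrite subr_ge0 (bigD1 x0) //= (negbTE hn) subr0 lerDl sumr_ge0 // => x _.
  by case: (_ == _); rewrite ?subrr ?subr0 ?ler01.
- apply: (main [set i.1]) => //.
    by apply: supp_aff => j; case: (eqVneq j i) => [-> _|_]; rewrite ?set11 ?eqxx.
  by move=> W h sW hW hh; rewrite ev_y mulr_ge0 ?pV0 ?ler0n.
- apply: (main [set i.1]) => //.
    by apply: supp_aff => j; case: (eqVneq j i) => [-> _|_]; rewrite ?set11 ?oppr0 ?eqxx.
  move=> W h sW hW hh; rewrite ev_1my mulr_ge0 ?pV0 //.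
  by case: (i \in gr h); rewrite ?subrr ?subr0.
Qed.

End Part2.



Section Part1.
Variables (F : realFieldType) (sig : finType) (ar : sig -> nat) (X A : finType).
Variable relX : forall R : sig, {set (ar R).-tuple X}.
Variable relA : forall R : sig, {set (ar R).-tuple A}.
Local Notation TT := (T X A).
Local Notation P := (mlpoly F X A).
Local Notation pf := (pfun X A).

Definition upd (g : pf) x a : pf := [ffun y => if y == x then Some a else g y].

Lemma card_gr (f : pf) : #|gr f| = #|pdom f|.
Proof.
have -> : pdom f = [set i.1 | i in gr f].
  apply/setP => x; rewrite in_pdom; apply/idP/imsetP => [|[[y a] hi /= ->]].
    case E: (f x) => [a|] // _; exists (x, a) => //; by rewrite in_gr E.
  by move: hi; rewrite in_gr /= => /eqP ->.
rewrite card_in_imset // => i j hi hj e.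
by move/consP: (sub_gr_cons (subxx (gr f))); apply.
Qed.

Lemma gr_upd (g : pf) x a : g x = None -> gr (upd g x a) = gr g :|: [set (x, a)].
Proof.
move=> gx; apply/setP => [[y b]]; rewrite in_setU in_set1 !in_gr /= ffunE.
case: (eqVneq y x) => [->|ne] /=; first by rewrite gx xpair_eqE eqxx.
by rewrite xpair_eqE (negbTE ne) orbF.
Qed.

Lemma pdom_upd (g : pf) x a : pdom (upd g x a) = x |: pdom g.
Proof.
apply/setP => y; rewrite in_setU1 !in_pdom ffunE.
by case: (eqVneq y x).
Qed.

Lemma upd_inj (g : pf) x a b : upd g x a = upd g x b -> a = b.
Proof. by move/(congr1 (fun h : pf => h x)); rewrite !ffunE eqxx => [[]]. Qed.

Lemma split_sum (G : pf -> F) (U V V' : {set X}) (f : pf) x :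
  x \notin V' -> U \subset V' -> V = x |: V' ->
  \sum_(g | (pdom g == V) && (prestr g U == f)) G g =
  \sum_(g' | (pdom g' == V') && (prestr g' U == f)) \sum_a G (upd g' x a).
Proof.
move=> xV' sU EV.
rewrite (partition_big (fun g => prestr g V') (fun g' => (pdom g' == V') && (prestr g' U == f))); last first.
  move=> g /andP [/eqP hg /eqP hf]; rewrite pdom_prestr hg EV prestr2 // hf eqxx andbT.
  by apply/eqP/setIidPr; apply: subsetUr.
apply: eq_bigr => g' /andP [/eqP hg' /eqP hf].
rewrite big_mkcond /=.
transitivity (\sum_g \sum_a (if g == upd g' x a then G g else 0)); last first.
  by rewrite exchange_big /=; apply: eq_bigr => a _; rewrite -big_mkcond big_pred1_eq.
apply: eq_bigr => g _; case: ifP => hC.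
  move: hC => /andP [/andP [/eqP hg /eqP hgf] /eqP hgV].
  have : x \in pdom g by rewrite hg EV setU11.
  rewrite in_pdom; case E: (g x) => [a|] // _.
  have ge : g = upd g' x a.
    apply/ffunP => y; rewrite ffunE; case: (eqVneq y x) => [->|ne] //.
    rewrite -hgV prestrE; case: ifP => // hy.
    apply/eqP; move: hy; apply: contraFT; rewrite -in_pdom hg EV in_setU1 (negbTE ne) //.
  rewrite (bigD1 a) //= -ge eqxx big1 ?addr0 // => b hb.
  case: eqP => // e; move: hb; by rewrite ge in e; rewrite (upd_inj e) eqxx.
apply/esym/big1 => a _; case: eqP => // e; move: hC; rewrite e.
have -> : pdom (upd g' x a) == V by rewrite pdom_upd hg' EV.
have -> : prestr (upd g' x a) U == f.
  rewrite -hf; apply/eqP/ffunP => y; rewrite !prestrE ffunE; case: ifP => // hy.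
  by case: (eqVneq y x) => // ey; move: xV'; rewrite -ey (subsetP sU y hy).
have -> // : prestr (upd g' x a) V' == g'.
apply/eqP/ffunP => y; rewrite !prestrE ffunE; case: ifP => hy.
  by case: (eqVneq y x) => // ey; move: xV'; rewrite -ey hy.
by apply/esym/eqP; move: hy; rewrite -hg' in_pdom => /negbFE.
Qed.

Variable k : nat.
Variable z : {set TT} -> F.
Hypothesis hz : PkL relX relA k z.

Lemma zz_ge0 (f : pf) : (0 < #|pdom f| <= k)%N -> 0 <= zz z (gr f).
Proof.
move=> /andP [f0 fk].
have : (0 < #|gr f|)%N by rewrite card_gr.
rewrite card_gt0 => /set0Pn [i0 hi0].
have := hz (q := ml_y F i0) (I := gr f :\ i0) (J := set0).
rewrite /ml_y lin_term0_aff mul0r add0r (bigD1 i0) //= eqxx mul1r big1 ?addr0; last first.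
  by move=> j /negbTE ->; rewrite mul0r.
rewrite (setUC (gr f :\ i0) [set i0]) setD1K //; apply.
- by right; right; right; left; exists i0.
- by rewrite -setI_eq0 setI0.
- rewrite setU0; have := cardsD1 i0 (gr f); rewrite hi0 card_gr /=; lia.
Qed.

Lemma zz_step (g : pf) x : x \notin pdom g -> (#|pdom g| <= k - 1)%N ->
  \sum_a zz z (gr (upd g x a)) = zz z (gr g).
Proof.
move=> hx hk.
have gx : g x = None by move: hx; rewrite in_pdom negbK => /eqP.
have d0 : [disjoint gr g & set0] by rewrite -setI_eq0 setI0.
have c0 : (#|gr g :|: set0| <= k - 1)%N by rewrite setU0 card_gr.
have h1 := hz (q := ml_aff (-1) (fun i : TT => if i.1 == x then 1 else 0)) (or_introl (ex_intro _ x erefl)) d0 c0.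
have h2 := hz (q := ml_aff 1 (fun i : TT => if i.1 == x then -1 else 0))
   (or_intror (or_introl (ex_intro _ x erefl))) d0 c0.
rewrite !lin_term0_aff in h1 h2.
set S := \sum_i (if i.1 == x then 1 else 0) * zz z (gr g :|: [set i]) in h1.
have eS : \sum_i (if i.1 == x then -1 else 0) * zz z (gr g :|: [set i]) = - S.
  rewrite /S -sumrN; apply: eq_bigr => i _; case: (i.1 == x); rewrite ?mulN1r ?mul1r ?mul0r ?oppr0 //.
rewrite eS in h2.
have -> : \sum_a zz z (gr (upd g x a)) = S.
  rewrite /S sum_pair (bigD1 x) //= [X in _ + X]big1 ?addr0; last first.
    by move=> y ne; apply: big1 => a _; rewrite (negbTE ne) mul0r.
  by apply: eq_bigr => a _; rewrite eqxx mul1r gr_upd.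
lra.
Qed.

Lemma restr_self (f : pf) (U : {set X}) : pdom f = U ->
  forall g : pf, ((pdom g == U) && (prestr g U == f)) = (g == f).
Proof.
move=> hf g; apply/andP/eqP => [[/eqP hg /eqP <-]|->]; first by rewrite prestr_pdom.
by rewrite hf prestr_pdom // eqxx.
Qed.

Lemma zz_marg (V U : {set X}) (f : pf) : U \subset V -> (#|V| <= k)%N -> pdom f = U ->
  zz z (gr f) = \sum_(g | (pdom g == V) && (prestr g U == f)) zz z (gr g).
Proof.
move=> sUV hV hf.
have [n hn] : exists n, #|V :\: U| = n by exists #|V :\: U|.
elim: n V hn sUV hV => [|n IH] V hn sUV hV.
  have EV : V = U.
    apply/eqP; rewrite eqEsubset sUV andbT -setD_eq0; apply/eqP; exact: cards0_eq.
  by rewrite EV (big_pred1 f) // => g; rewrite restr_self.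
have : (0 < #|V :\: U|)%N by rewrite hn.
rewrite card_gt0 => /set0Pn [x]; rewrite in_setD => /andP [xU xV].
set V' := V :\ x.
have xV' : x \notin V' by rewrite in_setD1 eqxx.
have sU : U \subset V'.
  apply/subsetP => y hy; rewrite in_setD1 (subsetP sUV y hy) andbT.
  by apply: contraNneq xU => <-.
have EV : V = x |: V' by rewrite setD1K.
have cV : #|V| = (#|V'|).+1 by rewrite (cardsD1 x V) xV.
rewrite (split_sum _ f xV' sU EV).
rewrite (IH V'); first last.
- lia.
- exact: sU.
- have e1 : (V :\: U) :\ x = V' :\: U.
    by apply/setP => y; rewrite !inE; case: (y == x); case: (y \in U); case: (y \in V).
  have := cardsD1 x (V :\: U); rewrite in_setD xU xV hn e1 /=; lia.
apply: eq_bigr => g' /andP [/eqP hg' _]; rewrite zz_step // ?hg' //; lia.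
Qed.

Lemma zz_rel0 R (t : (ar R).-tuple X) (f : pf) : t \in relX R -> pdom f = entries t ->
  entries t != set0 -> (#|entries t| <= k)%N ->
  (forall u : (ar R).-tuple A, [seq f i | i <- t] = [seq Some i | i <- u] -> u \notin relA R) ->
  zz z (gr f) = 0.
Proof.
move=> ht hf E0 Ek hu.
have f0 : (0 < #|pdom f| <= k)%N by rewrite hf card_gt0 E0.
have := f0; rewrite -card_gr => /andP [/card_gt0P [[x0 a0] hi0] _].
have fx0 : f x0 = Some a0 by move: hi0; rewrite in_gr => /eqP.
pose g : {ffun X -> A} := [ffun x => odflt a0 (f x)].
have hfg : forall x, x \in entries t -> f x = Some (g x).
  move=> x; rewrite -hf in_pdom ffunE; by case: (f x).
have hg : [tuple of map g t] \notin relA R.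
  apply: hu => /=; rewrite -map_comp; apply/eq_in_map => x hx; apply: hfg; by rewrite inE.
set E := entries t in hf E0 Ek hu hfg hg *.
set I := gr f :\ (x0, a0).
have cI : #|gr f| = (#|I|).+1 by rewrite (cardsD1 (x0, a0)) hi0.
have := hz (q := ml_aff (#|E|%:R - 1) (fun i : TT => if (i.1 \in E) && (i.2 == g i.1) then (-1 : F) else 0))
   (I := I) (J := set0).
rewrite lin_term0_aff.
have ec : forall i : TT, (if (i.1 \in E) && (i.2 == g i.1) then (-1 : F) else 0) = - (i \in gr f)%:R.
  move=> i; rewrite in_gr; case: (boolP (i.1 \in E)) => hi /=.
    by rewrite (hfg _ hi) (inj_eq (@Some_inj _)) [g _ == _]eq_sym; case: (i.2 == g i.1); rewrite ?oppr0.
  by move: hi; rewrite -hf in_pdom negbK => /eqP ->; rewrite oppr0.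
under eq_bigr do rewrite ec mulNr.
rewrite sumrN.
have es : \sum_i (i \in gr f)%:R * zz z (I :|: [set i]) = zz z (gr f) + zz z I *+ #|I|.
  rewrite (bigD1 (x0, a0)) //= hi0 mul1r setUC setD1K //; congr (_ + _).
  rewrite -sumr_const [RHS]big_mkcond [LHS]big_mkcond /=; apply: eq_bigr => i _.
  rewrite /I in_setD1; case: (eqVneq i (x0, a0)) => //= ni.
  case: (boolP (i \in gr f)) => hi; last by rewrite mul0r.
  by rewrite mul1r; congr zz; apply/setUidPl; rewrite sub1set in_setD1 ni hi.
rewrite es => H.
have eE : #|E| = (#|I|).+1 by rewrite -hf -card_gr.
have H' := H (or_intror (or_intror (or_introl (ex_intro _ R (ex_intro _ t (ex_intro _ g (And3 ht hg erefl))))))).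
have := H' ltac:(by rewrite -setI_eq0 setI0) ltac:(by rewrite setU0; move: Ek; rewrite eE; lia).
rewrite eE -addn1 natrD.
have := zz_ge0 f0.
set a := zz z I; set b := zz z (gr f); set n := (#|I|%:R : F).
move=> hb hh; apply/eqP; rewrite eq_le hb andbT.
have e : (n + 1%:R - 1) * a - (b + a *+ #|I|) = - b by rewrite -mulr_natl /n; ring.
by rewrite e oppr_ge0 in hh.
Qed.

End Part1.



Lemma part1 (F : realFieldType) (sig : finType) (ar : sig -> nat) (X A : finType)
  (relX : forall R : sig, {set (ar R).-tuple X})
  (relA : forall R : sig, {set (ar R).-tuple A}) (k r : nat) :
  (forall R, 0 < ar R)%N -> (forall R, ar R <= r)%N -> (0 < k)%N ->
  Pk_nonempty F relX relA k -> (r <= k)%N -> SA_feasible F relX relA k.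
Proof.
move=> ar0 arr k0 [y [z [hz _]]] rk.
have hsum : forall V : {set X}, (0 < #|V| <= k)%N ->
    \sum_(f : pfun X A | pdom f == V) zz z (gr f) = 1.
  move=> V /andP [_ hV].
  pose f0 : pfun X A := [ffun => None].
  have hf0 : pdom f0 = set0 by apply/setP => x; rewrite in_pdom ffunE inE eqxx.
  have gf0 : gr f0 = set0 by apply/setP => i; rewrite in_gr ffunE inE.
  have := zz_marg hz (sub0set V) hV hf0; rewrite gf0 {1}/zz eqxx => ->.
  apply: eq_bigl => g; rewrite (_ : prestr g set0 == f0) ?andbT //.
  by apply/eqP/ffunP => x; rewrite prestrE inE ffunE.
have bnd : forall (V : {set X}) (f : pfun X A), (0 < #|V| <= k)%N -> pdom f = V ->
    0 <= zz z (gr f) <= 1.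
  move=> V f hV hf; have f0 := zz_ge0 hz (f := f); rewrite hf in f0.
  rewrite f0 //= -(hsum V hV) (bigD1 f) /=; last by rewrite hf eqxx.
  rewrite lerDl sumr_ge0 // => g /andP [/eqP hg _]; by apply: (zz_ge0 hz); rewrite hg.
have Ek : forall R (t : (ar R).-tuple X), (0 < #|entries t| <= k)%N.
  move=> R t; rewrite card_gt0 entries_n0 //=.
  exact: leq_trans (entries_card t) (leq_trans (arr R) rk).
exists (fun V f => zz z (gr f)), (fun R t f => zz z (gr f)); split.
- split; first exact: bnd.
  by move=> R t f _ hf; exact: bnd (Ek R t) hf.
- exact: hsum.
- by move=> U V f _ sUV hV hf; apply: (zz_marg hz sUV hV hf).
- move=> R t U f _ _ sU _ hf; apply: (zz_marg hz sU _ hf).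
  by case/andP: (Ek R t).
- move=> R t f ht hf hu; apply: (zz_rel0 hz ht hf _ _ hu).
    exact: entries_n0.
  by case/andP: (Ek R t).
Qed.

Local Close Scope ring_scope.

Theorem lemmaA1 (F : realFieldType) (sig : finType) (ar : sig -> nat)
    (X A : finType)
    (relX : forall R : sig, {set (ar R).-tuple X})
    (relA : forall R : sig, {set (ar R).-tuple A})
    (k : nat) :
  (forall R : sig, 0 < ar R) -> 0 < #|sig| -> 0 < k ->
  let r := \max_(R : sig) ar R in
  (Pk_nonempty F relX relA k -> r <= k -> SA_feasible F relX relA k) /\
  (SA_feasible F relX relA (k + r - 1) -> Pk_nonempty F relX relA k).
Proof.
move=> ar0 sig0 k0 r.
have arr : forall R, (ar R <= r)%N by move=> R; exact: leq_bigmax.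
have r0 : (0 < r)%N.
  have [R0 _] : exists R0 : sig, true by move/card_gt0P: sig0 => [R0 _]; exists R0.
  exact: leq_trans (ar0 R0) (arr R0).
split; first exact: part1.
exact: part2.
Qed.
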